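(* Let $\|\cdot\|$ be a norm on $\mathbb{R}^d$ and $T:\mathbb{R}^d\to\mathbb{R}^d$ a $\gamma$-contraction, $\gamma\in(0,1)$, with unique fixed point $x^*$. Let $N\in\mathbb{N}$ be fixed, $x^0\in\mathbb{R}^d$, and $(x^n)$ generated by $x^n=(1-\beta_n)x^0+\beta_n(Tx^{n-1}+U_n)$ with $\beta_n=\frac{n}{n+1}$, where the random vectors $U_n$ satisfy, for some constant $\sigma>0$, $$\sigma_n^2\le\frac{\sigma^2}{n^2\gamma^{N-n}},\qquad \sigma_n:=\mathbb{E}(\|U_n\|),\quad n=1,\dots,N.$$ Then $\mathbb{E}(\|x^N-x^*\|)\le\dfrac{\|x^0-x^*\|+2\sigma}{(1-\gamma)(N+1)}$. *)

(* Defs.v *)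
From HB Require Import structures.
From mathcomp Require Import all_boot all_order all_algebra.
From mathcomp Require Import all_classical all_reals all_analysis.
Set Implicit Arguments. Unset Strict Implicit. Unset Printing Implicit Defensive.
Import Order.TTheory GRing.Theory Num.Theory.
Local Open Scope ring_scope.

Definition is_vnorm (R : realType) (d : nat) (nu : 'rV[R]_d -> R) : Prop :=
  [/\ forall x, 0 <= nu x,
      forall x, nu x = 0 -> x = 0,
      forall (a : R) x, nu (a *: x) = `|a| * nu x
    & forall x y, nu (x + y) <= nu x + nu y].

Definition is_gcontraction (R : realType) (d : nat) (nu : 'rV[R]_d -> R)
  (gamma : R) (T : 'rV[R]_d -> 'rV[R]_d) : Prop :=
  forall x y, nu (T x - T y) <= gamma * nu (x - y).

Definition beta (R : realType) (n : nat) : R := n%:R / n.+1%:R.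

Fixpoint halpern (R : realType) (d : nat) (T : 'rV[R]_d -> 'rV[R]_d)
  (U : nat -> 'rV[R]_d) (x0 : 'rV[R]_d) (n : nat) : 'rV[R]_d :=
  match n with
  | 0 => x0
  | m.+1 => (1 - beta R m.+1) *: x0 + beta R m.+1 *: (T (halpern T U x0 m) + U m.+1)
  end.

(* Main.v *)
Require Import Defs.
From HB Require Import structures.
From mathcomp Require Import all_boot all_order all_algebra.
From mathcomp Require Import all_classical all_reals all_analysis.
From mathcomp Require Import ring lra.
From mathcomp Require Import measurable_realfun.
Import Order.TTheory GRing.Theory Num.Theory.
Local Open Scope classical_set_scope.
Local Open Scope ring_scope.

Section M.
Variables (R : realType) (d : nat) (nu : 'rV[R]_d -> R).
Hypothesis hnu : is_vnorm nu.

Let c (i : 'I_d) : R := nu (delta_mx 0 i).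
Let Dist (x y : 'rV[R]_d) : R := \sum_i `|x 0 i - y 0 i| * c i.

Lemma nu0 : nu 0 = 0.
Proof. case: hnu => _ _ hs _. by rewrite -(scale0r 0) hs normr0 mul0r. Qed.

Lemma nu_sum (I : Type) (s : seq I) (F : I -> 'rV[R]_d) :
  nu (\sum_(i <- s) F i) <= \sum_(i <- s) nu (F i).
Proof.
case: hnu => _ _ _ ht.
elim: s => [|a s IH]; first by rewrite !big_nil nu0.
rewrite !big_cons; apply: (le_trans (ht _ _)); by rewrite lerD2l.
Qed.

Lemma nu_le_Dist0 x : nu x <= \sum_i `|x 0 i| * c i.
Proof.
case: hnu => _ _ hs _.
rewrite {1}(row_sum_delta x); apply: le_trans; first exact: nu_sum.
by apply: ler_sum => i _; rewrite hs.
Qed.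

Lemma nu_Dist x y : nu x <= nu y + Dist x y.
Proof.
case: hnu => _ _ _ ht.
rewrite {1}(_ : x = y + (x - y)); last by rewrite addrC subrK.
apply: (le_trans (ht _ _)); rewrite lerD2l.
apply: (le_trans (nu_le_Dist0 _)).
by apply: ler_sum => i _; rewrite !mxE.
Qed.

Lemma DistC x y : Dist x y = Dist y x.
Proof. by apply: eq_bigr => i _; rewrite distrC. Qed.

Lemma c_ge0 i : 0 <= c i.
Proof. by case: hnu => h _ _ _; exact: h. Qed.

Definition qv (q : {ffun 'I_d -> rat}) : 'rV[R]_d := \row_i ratr (q i).

Lemma Dist_approx x (e : R) : 0 < e -> exists q, Dist x (qv q) < e.
Proof.
move=> e0.
set C := \sum_i c i.
have C0 : 0 <= C by apply: sumr_ge0 => i _; exact: c_ge0.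
set eta := e / (1 + C).
have eta0 : 0 < eta by apply: divr_gt0 => //; apply: ltr_pwDl.
have : forall i : 'I_d, exists r : rat, ratr r \in `]x 0 i - eta, x 0 i + eta[.
  by move=> i; apply: rat_in_itvoo; rewrite ltrBlDr -addrA ltrDl addr_gt0.
move=> /fin_all_exists [f hf]; exists [ffun i => f i].
apply: (@le_lt_trans _ _ (\sum_i eta * c i)).
  apply: ler_sum => i _; rewrite !mxE ffunE; apply: ler_wpM2r; first exact: c_ge0.
  move: (hf i); rewrite in_itv /= => /andP[h1 h2].
  rewrite ler_norml; apply/andP; split; lra.
rewrite -mulr_sumr -/C /eta mulrAC ltr_pdivrMr; last by apply: ltr_pwDl.
rewrite mulrDr mulr1; lra.
Qed.

Lemma nu_measurable dO (Omega : measurableType dO) (V : Omega -> 'rV[R]_d) :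
  (forall i, measurable_fun setT (fun w => V w ord0 i)) ->
  measurable_fun setT (fun w => nu (V w)).
Proof.
move=> mV; apply: (measurability _ (RGenOInfty.measurableE R)) => //.
move=> /= _ [_ [a ->] <-]; rewrite preimage_itvoy.
rewrite [X in measurable X](_ : _ = \bigcup_(q : {ffun 'I_d -> rat})
  [set w | a < nu (qv q) - Dist (V w) (qv q)]).
  apply: countable_bigcupT_measurable; first exact: countableP.
  move=> q.
  have mg : measurable_fun setT (fun w => nu (qv q) - Dist (V w) (qv q)).
    apply: measurable_funB; first exact: measurable_cst.
    apply: measurable_sum => i; apply: measurable_funM; last exact: measurable_cst.
    apply: measurableT_comp; first exact: normr_measurable.
    apply: measurable_funB => //; exact: measurable_cst.
  have := mg measurableT _ (measurable_itv `]a, +oo[).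
  by rewrite setTI preimage_itvoy.
apply/seteqP; split => w /=.
  move=> [_ hw].
  have e0 : 0 < (nu (V w) - a) / 2 by rewrite divr_gt0 // subr_gt0.
  have [q hq] := Dist_approx (V w) _ e0.
  exists q => //=.
  have h1 := nu_Dist (V w) (qv q).
  lra.
move=> [q _ /= hq]; split => //.
have := nu_Dist (qv q) (V w); rewrite DistC; lra.
Qed.
End M.

Lemma halpern_bound (R : realType) (d : nat) (nu : 'rV[R]_d -> R)
  (gamma : R) (T : 'rV[R]_d -> 'rV[R]_d) (xstar x0 : 'rV[R]_d) (V : nat -> 'rV[R]_d) :
  is_vnorm nu -> 0 <= gamma -> is_gcontraction nu gamma T -> T xstar = xstar ->
  forall n, n.+1%:R * nu (halpern T V x0 n - xstar) <=
    nu (x0 - xstar) * \sum_(k < n.+1) gamma ^+ k +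
    \sum_(m < n.+1) gamma ^+ (n - m) * m%:R * nu (V m).
Proof.
move=> [nu0 _ nuZ nuD] g0 hT hx.
elim=> [|n IH].
  by rewrite /= !big_ord1 subnn expr0 !mul1r mulr1 mulr0n mul0r addr0.
set D := nu (x0 - xstar).
set e := nu (halpern T V x0 n - xstar).
set b := beta R n.+1.
have bE : b = n.+1%:R / n.+2%:R by [].
have n2 : 0 < n.+2%:R :> R by rewrite ltr0n.
have b0 : 0 <= b by rewrite bE divr_ge0.
have b1 : 0 <= 1 - b.
  by rewrite subr_ge0 bE ler_pdivrMr // mul1r ler_nat.
have E : halpern T V x0 n.+1 - xstar =
   (1 - b) *: (x0 - xstar) + b *: ((T (halpern T V x0 n) - T xstar) + V n.+1).
  rewrite hx /=; apply/rowP => j; rewrite !mxE -/b; ring.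
have step : nu (halpern T V x0 n.+1 - xstar) <=
    (1 - b) * D + b * (gamma * e + nu (V n.+1)).
  rewrite E; apply: le_trans; first exact: nuD.
  rewrite !nuZ (ger0_norm b0) (ger0_norm b1) lerD2l ler_wpM2l //.
  apply: le_trans; first exact: nuD.
  by rewrite lerD2r; exact: hT.
have e0 : 0 <= e by exact: nu0.
have step2 : n.+2%:R * nu (halpern T V x0 n.+1 - xstar) <=
    D + gamma * (n.+1%:R * e) + n.+1%:R * nu (V n.+1).
  apply: le_trans; first by apply: ler_wpM2l; [exact: ltW | exact: step].
  have h1 : n.+2%:R * (1 - b) = 1.
    by rewrite bE; field.
  have h2 : n.+2%:R * b = n.+1%:R.
    by rewrite bE; field.
  rewrite mulrDr (mulrA _ (1-b)) h1 mul1r (mulrA _ b) h2 mulrDr mulrCA addrA.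
  exact: le_refl.
apply: le_trans; first exact: step2.
have IH2 := ler_wpM2l g0 IH.
have S1 : \sum_(k < n.+2) gamma ^+ k = 1 + gamma * \sum_(k < n.+1) gamma ^+ k.
  rewrite big_ord_recl mulr_sumr expr0; congr (_ + _); apply: eq_bigr => i _.
  by rewrite lift0 exprS.
have S2 : \sum_(m < n.+2) gamma ^+ (n.+1 - m) * m%:R * nu (V m) =
   gamma * \sum_(m < n.+1) gamma ^+ (n - m) * m%:R * nu (V m) + n.+1%:R * nu (V n.+1).
  rewrite big_ord_recr /= subnn expr0 mul1r mulr_sumr; congr (_ + _).
  apply: eq_bigr => i _; have := ltn_ord i; rewrite ltnS => hi.
  by rewrite subSn // exprS !mulrA.
rewrite S1 S2.
move: IH2; set S := \sum_(k < n.+1) _; set S' := \sum_(m < n.+1) _ => IH2.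
rewrite (_ : D * (1 + gamma * S) + (gamma * S' + n.+1%:R * nu (V n.+1)) =
   D + gamma * (D * S + S') + n.+1%:R * nu (V n.+1)); last by ring.
by rewrite lerD2r lerD2l.
Qed.

Lemma le_integral_nm dO (Omega : measurableType dO) (R : realType)
  (P : probability Omega R) (f g : Omega -> \bar R) :
  (forall x, (0 <= f x)%E) -> (forall x, (f x <= g x)%E) ->
  (\int[P]_x f x <= \int[P]_x g x)%E.
Proof.
move=> f0 fg.
have g0 : forall x, (0 <= g x)%E by move=> x; exact: le_trans (f0 x) (fg x).
rewrite !ge0_integralTE //=; apply: ge_ereal_sup => _ [h hh <-].
apply: ereal_sup_ubound; exists h => //= x; exact: le_trans (hh x) (fg x).
Qed.

Lemma aux_bound (R : realType) (g s r M : R) k : 0 < g -> 0 < M -> 0 <= r -> 0 <= s ->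
  r * r <= s ^+ 2 / (M ^+ 2 * g ^+ k) -> g ^+ k * M * r <= s * (Num.sqrt g) ^+ k.
Proof.
move=> g0 M0 r0 s0 h.
have gk : 0 < g ^+ k by exact: exprn_gt0.
rewrite ler_pdivlMr in h; last by rewrite mulr_gt0 // exprn_gt0.
have hY : 0 <= s * (Num.sqrt g) ^+ k by rewrite mulr_ge0 // exprn_ge0 // sqrtr_ge0.
have hX : 0 <= g ^+ k * M * r by rewrite !mulr_ge0 // ltW.
suff H2 : (g ^+ k * M * r) ^+ 2 <= (s * (Num.sqrt g) ^+ k) ^+ 2.
  move: hY hX H2; set X := g ^+ k * M * r; set Y := s * _ => hY hX H2; nra.
rewrite [X in _ <= X]exprMn -exprM mulnC exprM (sqr_sqrtr (ltW g0)).
have -> : (g ^+ k * M * r) ^+ 2 = g ^+ k * (r * r * (M ^+ 2 * g ^+ k)).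
  by rewrite !exprMn; ring.
rewrite (mulrC (s ^+ 2)); apply: ler_wpM2l => //; exact: ltW.

Qed.

Lemma geom1 (R : realType) (g : R) n : 0 <= g -> (1 - g) * \sum_(k < n) g ^+ k <= 1.
Proof.
move=> g0.
have E : (1 - g) * \sum_(k < n) g ^+ k = 1 - g ^+ n.
  have := subrX1 g n => h.
  rewrite -[1 - g]opprB mulNr -h opprB //.
rewrite E lerBlDr lerDl; exact: exprn_ge0.
Qed.

Lemma sum_rev (R : realType) (s : R) N :
  \sum_(m < N.+1) s ^+ (N - m) = \sum_(m < N.+1) s ^+ m.
Proof.
rewrite (reindex_inj rev_ord_inj) /=; apply: eq_bigr => i _.
have := ltn_ord i; rewrite ltnS => hi.
by rewrite subSS subKn.
Qed.

Theorem theorem4 (R : realType) (d : nat) (nu : 'rV[R]_d -> R)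
  (gamma : R) (T : 'rV[R]_d -> 'rV[R]_d) (xstar x0 : 'rV[R]_d)
  (dO : measure_display) (Omega : measurableType dO)
  (P : probability Omega R)
  (U : nat -> Omega -> 'rV[R]_d) (sigma : R) (N : nat) :
  is_vnorm nu ->
  0 < gamma < 1 ->
  is_gcontraction nu gamma T ->
  T xstar = xstar ->
  (forall n (i : 'I_d), measurable_fun setT (fun w => U n w ord0 i)) ->
  0 < sigma ->
  (forall n : nat, (1 <= n <= N)%N ->
     ((\int[P]_w (nu (U n w))%:E) * (\int[P]_w (nu (U n w))%:E) <=
      (sigma ^+ 2 / (n%:R ^+ 2 * gamma ^+ (N - n)))%:E)%E) ->
  (\int[P]_w (nu (halpern T (fun n => U n w) x0 N - xstar))%:E <=
   ((nu (x0 - xstar) + 2 * sigma) / ((1 - gamma) * N.+1%:R))%:E)%E.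
Proof.
move=> hnu /andP[g0 g1] hT hx mU s0 hU.
have [nuge0 _ _ _] := hnu.
set D := nu (x0 - xstar).
pose u m w := nu (U m w).
have mu m : measurable_fun setT (u m).
  by apply: (@nu_measurable R d nu hnu dO Omega (U m)) => i; exact: mU.
pose a m := gamma ^+ (N - m) * m%:R / N.+1%:R.
pose S := \sum_(k < N.+1) gamma ^+ k.
pose c0 := D * S / N.+1%:R.
have N0 : 0 < N.+1%:R :> R by rewrite ltr0n.
have a0 m : 0 <= a m.
  rewrite /a; apply: divr_ge0; last exact: ltW.
  by apply: mulr_ge0; [exact: exprn_ge0 _ (ltW g0)|exact: ler0n].
have S0 : 0 <= S by apply: sumr_ge0 => k _; apply: exprn_ge0; exact: ltW.
have c00 : 0 <= c0 by rewrite /c0; apply: divr_ge0; [exact: mulr_ge0 (nuge0 _) S0|exact: ltW].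
have step1 : (\int[P]_w (nu (halpern T (fun n => U n w) x0 N - xstar))%:E <=
   \int[P]_w (c0%:E + \sum_(m < N.+1) (a m)%:E * (u m w)%:E))%E.
  apply: le_integral_nm => w; first by rewrite lee_fin.
  under eq_bigr do rewrite -EFinM.
  rewrite sumEFin -EFinD lee_fin.
  have := halpern_bound _ _ _ _ _ _ _ (fun n => U n w) hnu (ltW g0) hT hx N.
  rewrite /c0 /a -/D -/S.
  under [X in _ -> _ <= _ + X]eq_bigr do rewrite mulrAC.
  rewrite -mulr_suml -mulrDl ler_pdivlMr // mulrC.
  by [].
have mf m : measurable_fun setT (fun w => ((a m)%:E * (u m w)%:E)%E).
  by apply: measurable_funeM; exact/measurable_EFinP.
have f0 m w : (0 <= (a m)%:E * (u m w)%:E)%E.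
  by rewrite -EFinM lee_fin; exact: mulr_ge0 (a0 m) (nuge0 _).
have step2 : (\int[P]_w (c0%:E + \sum_(m < N.+1) (a m)%:E * (u m w)%:E) =
   c0%:E + \sum_(m < N.+1) (a m)%:E * \int[P]_w (u m w)%:E)%E.
  rewrite (ge0_integralD P measurableT).
  - rewrite (integral_cst P measurableT) [X in (_ * X)%E]probability_setT mule1; congr (_ + _)%E.
    rewrite (ge0_integral_sum P measurableT) //; apply: eq_bigr => m _.
    rewrite ge0_integralZl //.
    + by apply/measurable_EFinP; exact: mu.
    + by move=> w _; rewrite lee_fin; exact: nuge0.
    + by rewrite lee_fin.
  - by move=> w _; rewrite lee_fin.
  - exact: measurable_cst.
  - by move=> w _; apply: sume_ge0 => m _.
  - exact: emeasurable_sum.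
pose s := Num.sqrt gamma.
have s0' : 0 <= s := sqrtr_ge0 gamma.
have step3 (m : 'I_N.+1) :
    ((a m)%:E * \int[P]_w (u m w)%:E <= (sigma * s ^+ (N - m) / N.+1%:R)%:E)%E.
  have sN : 0 <= sigma * s ^+ (N - m) / N.+1%:R.
    apply: divr_ge0; last exact: ltW.
    by apply: mulr_ge0; [exact: ltW | exact: exprn_ge0].
  case: (posnP m) => [m0|mpos].
    by move: sN; rewrite /a m0 mulr0 mul0r mul0e lee_fin.
  have hm : (1 <= m <= N)%N by rewrite mpos -ltnS ltn_ord.
  have I0 : (0 <= \int[P]_w (u m w)%:E)%E.
    by apply: integral_ge0 => w _; rewrite lee_fin; exact: nuge0.
  move: I0 (hU m hm); rewrite /u.
  case: (\int[P]_w (nu (U m w))%:E)%E => [r| |] //=.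
    move=> r0 h; rewrite lee_fin in r0; rewrite -EFinM lee_fin in h.
    rewrite -EFinM lee_fin /a mulrAC ler_pM2r ?invr_gt0 //.
    by apply: aux_bound => //; [rewrite ltr0n | exact: ltW].
apply: le_trans; first exact: step1.
rewrite step2.
apply: le_trans.
  by apply: leeD2l; apply: lee_sum => m _; exact: step3.
rewrite sumEFin -EFinD lee_fin.
rewrite -mulr_suml -mulr_sumr sum_rev /c0.
set S' := \sum_(m < N.+1) s ^+ m.
have s2 : s ^+ 2 = gamma := sqr_sqrtr (ltW g0).
have s1 : s < 1 by nra.
have hS : (1 - gamma) * S <= 1 := geom1 _ _ _ (ltW g0).
have hS' : (1 - s) * S' <= 1 := geom1 _ _ _ s0'.
have S'0 : 0 <= S' by apply: sumr_ge0 => k _; exact: exprn_ge0.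
have hS2 : (1 - gamma) * S' <= 2.
  rewrite -s2 (_ : 1 - s ^+ 2 = (1 + s) * (1 - s)); last by ring.
  rewrite -mulrA.
  have X0 : 0 <= (1 - s) * S' by apply: mulr_ge0 => //; lra.
  move: X0 hS'; set X := (1 - s) * S' => X0 hX; nra.
rewrite invfM mulrA -mulrDl ler_pM2r ?invr_gt0 //.
rewrite ler_pdivlMr ?subr_gt0 //.
have h1 := ler_wpM2l (nuge0 (x0 - xstar)) hS.
have h2 := ler_wpM2l (ltW s0) hS2.
rewrite -/D in h1; nra.
Qed.
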